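(* The wall $W$ has a $4$-track layout such that for all distinct edges $pq$ and $pr$, the vertices $q$ and $r$ are in distinct tracks.
   Context: The wall is the infinite graph $W$ with vertex set $\mathbb{Z}^2$ and edge set $\{(x,y)(x+1,y): x,y\in\mathbb{Z}\}\cup\{(x,y)(x,y+1): x,y\in\mathbb{Z},\ x+y\text{ even}\}$. A track in a graph is an independent set equipped with a total order $\preceq$. A $k$-track layout is a partition $(V_1,\dots,V_k)$ of the vertex set into tracks such that there are no edges $vw$ and $xy$ with $v\prec x$ in some track $V_i$ and $y\prec w$ in some track $V_j$. *)

(* Defs.v *)
From Stdlib Require Import ZArith.
Open Scope Z_scope.

Definition vertex := (Z * Z)%type.

Definition wall_edge (u v : vertex) : Prop :=
  (fst v = fst u + 1 /\ snd v = snd u) \/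
  (fst v = fst u /\ snd v = snd u + 1 /\ Z.Even (fst u + snd u)).

Definition wall_adj (u v : vertex) : Prop := wall_edge u v \/ wall_edge v u.

Definition total_order_on {V : Type} (S : V -> Prop) (le : V -> V -> Prop) : Prop :=
  (forall a, S a -> le a a) /\
  (forall a b, S a -> S b -> le a b -> le b a -> a = b) /\
  (forall a b c, S a -> S b -> S c -> le a b -> le b c -> le a c) /\
  (forall a b, S a -> S b -> le a b \/ le b a).

Definition track_prec {V : Type} (track : V -> nat) (ord : nat -> V -> V -> Prop)
  (a b : V) : Prop :=
  exists i, track a = i /\ track b = i /\ ord i a b /\ a <> b.

Definition is_track_layout {V : Type} (adj : V -> V -> Prop) (k : nat)
  (track : V -> nat) (ord : nat -> V -> V -> Prop) : Prop :=
  (forall v, (track v < k)%nat) /\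
  (forall i, total_order_on (fun v => track v = i) (ord i)) /\
  (forall u v, adj u v -> track u <> track v) /\
  (forall v w x y, adj v w -> adj x y ->
     track_prec track ord v x -> track_prec track ord y w -> False).

(* Main.v *)
Require Import Defs.
From Stdlib Require Import ZArith Lia.
Open Scope Z_scope.

Definition trk (v : vertex) : nat := Z.to_nat ((fst v + 2 * snd v) mod 4).
Definition lex (i : nat) (a b : vertex) : Prop :=
  fst a < fst b \/ (fst a = fst b /\ snd a <= snd b).

Lemma pair_neq (a b c d : Z) : (a, b) <> (c, d) -> a <> c \/ b <> d.
Proof. intros H. destruct (Z.eq_dec a c); destruct (Z.eq_dec b d); subst; auto. Qed.

Lemma adj_cases (a b c d : Z) : wall_adj (a, b) (c, d) ->
  (c = a + 1 /\ d = b) \/ (a = c + 1 /\ b = d) \/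
  (c = a /\ d = b + 1 /\ exists m, a + b = 2 * m) \/
  (a = c /\ b = d + 1 /\ exists m, c + d = 2 * m).
Proof.
  unfold wall_adj, wall_edge, Z.Even; simpl; intuition.
Qed.

Lemma modeq x y : x mod 4 = y mod 4 -> exists k, x = y + 4 * k.
Proof. intros H. exists (x / 4 - y / 4).
 pose proof (Z.div_mod x 4 ltac:(lia)). pose proof (Z.div_mod y 4 ltac:(lia)). lia. Qed.

Lemma trk_eq (a b c d : Z) : trk (a, b) = trk (c, d) ->
  exists k, a + 2 * b = c + 2 * d + 4 * k.
Proof.
  unfold trk; cbn [fst snd]; intros H. apply modeq.
  apply Z2Nat.inj in H; auto; apply Z.mod_pos_bound; lia.
Qed.

Theorem lemma13 :
  exists (track : vertex -> nat) (ord : nat -> vertex -> vertex -> Prop),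
    is_track_layout wall_adj 4 track ord /\
    (forall p q r : vertex, wall_adj p q -> wall_adj p r -> q <> r ->
       track q <> track r).
Proof.
  exists trk, lex. split; [split; [|split; [|split]]|].
  - intros [a b]; unfold trk; cbn [fst snd].
    pose proof (Z.mod_pos_bound (a + 2 * b) 4 ltac:(lia)). apply Nat2Z.inj_lt; rewrite Z2Nat.id. all: lia.
  - intros i; unfold total_order_on, lex; split; [|split; [|split]].
    + intros; lia.
    + intros [a b] [c d] _ _ H1 H2; simpl in *. f_equal; lia.
    + intros [a b] [c d] [e f] _ _ _; simpl; lia.
    + intros [a b] [c d] _ _; simpl; lia.
  - intros [a b] [c d] H E. apply trk_eq in E; destruct E as [k E].
    apply adj_cases in H; destruct H as [H|[H|[[? [? [m ?]]]|[? [? [m ?]]]]]];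
    try destruct H; subst; lia.
  - intros [a b] [c d] [e f] [g h] H1 H2 [i [E1 [E2 [O1 N1]]]] [j [E3 [E4 [O2 N2]]]].
    rewrite <- E2 in E1. rewrite <- E4 in E3. apply trk_eq in E1; destruct E1 as [k E1]. apply trk_eq in E3; destruct E3 as [k3 E3].
    apply pair_neq in N1; apply pair_neq in N2. unfold lex in *; cbn [fst snd] in *.
    apply adj_cases in H1; apply adj_cases in H2.
    destruct H1 as [H|[H|[[? [? [m ?]]]|[? [? [m ?]]]]]];
    destruct H2 as [H'|[H'|[[? [? [m' ?]]]|[? [? [m' ?]]]]]];
    try destruct H; try destruct H'; subst; lia.
  - intros [a b] [c d] [e f] H1 H2 N E. apply trk_eq in E; destruct E as [k E]. apply pair_neq in N.
    apply adj_cases in H1; apply adj_cases in H2.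
    destruct H1 as [H|[H|[[? [? [m ?]]]|[? [? [m ?]]]]]];
    destruct H2 as [H'|[H'|[[? [? [m' ?]]]|[? [? [m' ?]]]]]];
    try destruct H; try destruct H'; subst; lia.
Qed.
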